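(* For all $\varepsilon>0$ and $\delta\in[0,1)$, if $P$ and $Q$ are $(\varepsilon,\delta)$-indistinguishable probability distributions, then \[ B(P,Q)\le \ln\Big(\frac{e^{\varepsilon/2}+e^{-\varepsilon/2}}{2}\Big)+\ln\Big(\frac1{1-\delta}\Big)\le\min\Big\{\frac{\varepsilon^2}{8},\frac{\varepsilon}{2}\Big\}+\frac{\delta}{1-\delta}. \]
   Context: Distributions $P,Q$ (on a common space) are $(\varepsilon,\delta)$-indistinguishable if for every event $Y$, $P(Y)\le e^\varepsilon Q(Y)+\delta$ and $Q(Y)\le e^\varepsilon P(Y)+\delta$. The Bhattacharyya coefficient is $\mathrm{BC}(P\|Q)=\int\sqrt{P(x)Q(x)}\,dx$ (densities w.r.t. a common dominating measure) and the Bhattacharyya distance is $B(P,Q)=-\ln\mathrm{BC}(P\|Q)$. *)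

(* Defs.v *)
From HB Require Import structures.
From mathcomp Require Import all_boot all_order all_algebra.
From mathcomp Require Import all_classical all_reals all_analysis.
Set Implicit Arguments. Unset Strict Implicit. Unset Printing Implicit Defensive.
Import Order.TTheory GRing.Theory Num.Theory.
Local Open Scope classical_set_scope.
Local Open Scope ring_scope.

Definition indist (d : measure_display) (T : measurableType d) (R : realType)
  (P Q : probability T R) (eps delta : R) : Prop :=
  forall Y : set T, measurable Y ->
    (P Y <= (expR eps)%:E * Q Y + delta%:E)%E /\
    (Q Y <= (expR eps)%:E * P Y + delta%:E)%E.

Definition is_density (d : measure_display) (T : measurableType d) (R : realType)
  (mu : {measure set T -> \bar R}) (P : probability T R) (f : T -> R) : Prop :=
  measurable_fun setT f /\ (forall x, 0 <= f x) /\
  forall A : set T, measurable A -> P A = (\int[mu]_(x in A) (f x)%:E)%E.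

Definition BC (d : measure_display) (T : measurableType d) (R : realType)
  (mu : {measure set T -> \bar R}) (p q : T -> R) : \bar R :=
  (\int[mu]_x (Num.sqrt (p x * q x))%:E)%E.

Definition Bdist (d : measure_display) (T : measurableType d) (R : realType)
  (mu : {measure set T -> \bar R}) (p q : T -> R) : \bar R :=
  match BC mu p q with
  | EFin r => if 0 < r then (- ln r)%:E else +oo%E
  | +oo%E => -oo%E (* -ln(+oo); unreachable since BC <= 1 *)
  | -oo%E => +oo%E
  end.

(* Main.v *)
Require Import Defs.
From HB Require Import structures.
From mathcomp Require Import all_boot all_order all_algebra.
From mathcomp Require Import all_classical all_reals all_analysis.
From mathcomp Require Import lra ring.
Import Order.TTheory GRing.Theory Num.Theory.
Import numFieldNormedType.Exports.
Import measurable_realfun.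
Local Open Scope classical_set_scope.
Local Open Scope ring_scope.


Section Calc.
Variable R : realType.

Lemma incr_helper (f df : R -> R) :
  (forall x : R, is_derive x (1:R) f (df x)) -> (forall x, 0 < x -> 0 <= df x) ->
  forall t, 0 <= t -> f 0 <= f t.
Proof.
move=> hd hpos t t0.
apply: (@ger0_derive1_ndecry R f 0) => //.
- move=> x; rewrite in_itv /= andbT => x0.
  by rewrite derive1E (@derive_val _ _ _ _ _ _ _ (hd x)); apply: hpos.
- have cf : forall x : R, {for x, continuous f}.
    move=> x; apply: differentiable_continuous; apply/derivable1_diffP.
    have hx := hd x; exact: ex_derive.
  exact: continuous_subspaceT.
Qed.

Lemma is_derive_expN x : is_derive x (1:R) (fun t : R => expR (- t)) (- expR (- x)).
Proof.
have H := @is_derive1_comp R expR (@GRing.opp R) x (expR (- x)) (-1) _ _.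
rewrite mulrN1 in H; exact: H.
Qed.

Let E := fun t : R => expR (- t).
#[local] Instance isdE x : is_derive x (1:R) E (- expR (- x)).
Proof. exact: is_derive_expN. Qed.

Lemma kder x : is_derive x (1:R) ((id * (expR + E)) - (expR - E))%R (x * (expR x - expR (- x))).
Proof.
apply: is_derive_eq. rewrite /E /= -[_%:A]/(_ * 1) mulr1 -[_ *: _]/(_ * _).
rewrite opprK -[(expR + _) x]/(expR x + expR (- x)); ring.
Qed.

Lemma S_ge0 (t : R) : 0 <= t -> 0 <= expR t - expR (- t).
Proof. by move=> t0; rewrite subr_ge0 ler_expR; lra. Qed.

Lemma k_ge0 (t : R) : 0 <= t -> expR t - expR (- t) <= t * (expR t + expR (- t)).
Proof.
move=> t0.
have := @incr_helper ((id * (expR + E)) - (expR - E))%R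
  (fun x => x * (expR x - expR (- x))) kder.
move=> H; have hp : forall x : R, 0 < x -> 0 <= x * (expR x - expR (- x)).
  by move=> x x0; rewrite mulr_ge0 ?S_ge0 ?ltW.
have {H} := H hp t t0.
rewrite /E /= -[X in X <= _ -> _]/(0 * (expR 0 + expR (- 0)) - (expR 0 - expR (- 0))).
rewrite -[X in _ <= X -> _]/(t * (expR t + expR (- t)) - (expR t - expR (- t))).
rewrite oppr0 expR0 mul0r subrr subr0; lra.
Qed.

Let Qf := ((- 2^-1 : R) *: (@id R * id))%R.

Lemma Gder x : is_derive x (1:R)
  ((cst 2 - (expR + E) * (expR \o Qf)))%R
  (expR (Qf x) * (x * (expR x + expR (- x)) - (expR x - expR (- x)))).
Proof.
apply: is_derive_eq.
rewrite -[LHS]/(0 - ((expR x + expR (- x)) * (expR (Qf x) * (- 2^-1 * (x * 1 + x * 1))) + expR (Qf x) * (expR x - expR (- x)))).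
by field.
Qed.

Lemma cosh_le (t : R) : 0 <= t -> expR t + expR (- t) <= 2 * expR (t * t / 2).
Proof.
move=> t0.
have hp : forall x : R, 0 < x ->
    0 <= expR (Qf x) * (x * (expR x + expR (- x)) - (expR x - expR (- x))).
  by move=> x x0; rewrite mulr_ge0 ?expR_ge0 // subr_ge0 k_ge0 // ltW.
have := @incr_helper ((cst 2 - (expR + E) * (expR \o Qf)))%R _ Gder hp t t0.
rewrite -[X in X <= _ -> _]/(2 - (expR 0 + expR (- 0)) * expR (- 2^-1 * (0 * 0))).
rewrite -[X in _ <= X -> _]/(2 - (expR t + expR (- t)) * expR (- 2^-1 * (t * t))).
rewrite oppr0 mulr0 mulr0 expR0 mulr1 subrr subr_ge0 => H.
have e : expR (- 2^-1 * (t * t)) * expR (t * t / 2) = 1.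
  by rewrite -expRD -expR0; congr expR; field.
have hpos := expR_gt0 (t * t / 2).
move: H e hpos; set u := expR (- 2^-1 * (t * t)); set v := expR (t * t / 2).
set C := expR t + expR (- t) => H e hpos.
have -> : C = C * u * v by rewrite -mulrA e mulr1.
by rewrite ler_wpM2r // ltW.
Qed.

Lemma real_part (eps delta : R) : 0 < eps -> 0 <= delta -> delta < 1 ->
  ln ((expR (eps / 2) + expR (- (eps / 2))) / 2) + ln (1 / (1 - delta))
    <= Num.min (eps ^+ 2 / 8) (eps / 2) + delta / (1 - delta).
Proof.
move=> e0 d0 d1.
have cpos : 0 < (expR (eps / 2) + expR (- (eps / 2))) / 2.
  by rewrite divr_gt0 // addr_gt0 // expR_gt0.
apply: lerD.
  rewrite le_min; apply/andP; split.
    rewrite -[X in _ <= X](expRK (eps ^+ 2 / 8)) ler_ln ?posrE ?expR_gt0 //.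
    have := @cosh_le (eps / 2) (ltW (divr_gt0 e0 (ltr0n _ 2))).
    have -> : eps / 2 * (eps / 2) / 2 = eps ^+ 2 / 8 by field.
    move=> H; rewrite ler_pdivrMr //; lra.
  rewrite -[X in _ <= X](expRK (eps / 2)) ler_ln ?posrE ?expR_gt0 //.
  have h1 : expR (- (eps / 2)) <= 1 by rewrite expR_le1; lra.
  have h2 : 1 <= expR (eps / 2) by rewrite -expR0 ler_expR divr_ge0 // ltW.
  rewrite ler_pdivrMr //; lra.
have -> : 1 / (1 - delta) = 1 + delta / (1 - delta) by field; lra.
apply: le_ln1Dx.
have : 0 <= delta / (1 - delta) by rewrite divr_ge0 //; lra.
lra.
Qed.
End Calc.


Lemma min_int_bound (R : realType) (d : measure_display) (T : measurableType d)
  (mu : {measure set T -> \bar R}) (P Q : probability T R) (p q : T -> R)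
  (k delta : R) :
  0 <= k ->
  measurable_fun setT p -> (forall x, 0 <= p x) ->
  (forall A : set T, measurable A -> P A = (\int[mu]_(x in A) (p x)%:E)%E) ->
  measurable_fun setT q -> (forall x, 0 <= q x) ->
  (forall A : set T, measurable A -> Q A = (\int[mu]_(x in A) (q x)%:E)%E) ->
  (forall Y : set T, measurable Y -> (P Y <= k%:E * Q Y + delta%:E)%E) ->
  ((1 - delta)%:E <= \int[mu]_x (Num.min (p x) (k * q x))%:E)%E.
Proof.
move=> k0 mp p0 hP mq q0 hQ hind.
have mkq : measurable_fun setT (fun x => k * q x).
  by apply: measurable_funM => //; exact: measurable_cst.
pose A := [set x | ((k * q x)%:E < (p x)%:E)%E].
have mA : measurable A.
  rewrite -[A]setTI; apply: measurable_lte => //.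
    by apply/measurable_EFinP.
  by apply/measurable_EFinP.
have mAC : measurable (~` A) by apply: measurableC.
have mmin : measurable_fun setT (fun x => (Num.min (p x) (k * q x))%:E).
  by apply/measurable_EFinP; apply: measurable_minr.
have h1 : forall x, (A `|` ~` A) x -> (0 <= (Num.min (p x) (k * q x))%:E)%E.
  by move=> x _; rewrite lee_fin le_min p0 mulr_ge0.
have h2 : measurable_fun (A `|` ~` A) (fun x => (Num.min (p x) (k * q x))%:E).
  by rewrite setUv.
have h3 : [disjoint A & ~` A] by apply/disj_setPRL.
rewrite -(setUv A) ge0_integral_setU //.
rewrite (@eq_integral _ _ _ _ A (fun x => (k%:E * (q x)%:E)%E)); last first.
  move=> x; rewrite inE /A /= lte_fin => hx.
  by rewrite -EFinM; congr EFin; apply/min_idPr/ltW.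
rewrite (@eq_integral _ _ _ _ (~` A) (fun x => (p x)%:E)); last first.
  move=> x; rewrite inE /A /= lte_fin => /negP; rewrite -leNgt => hx.
  by congr EFin; apply/min_idPl.
have mqA : measurable_fun A (fun x => (q x)%:E).
  apply/measurable_EFinP; exact: measurable_funS mq.
have q0A : forall x, A x -> (0 <= (q x)%:E)%E by move=> x _; rewrite lee_fin.
rewrite ge0_integralZl_EFin //.
rewrite -hQ // -hP //.
have := hind A mA.
rewrite probability_setC //.
have fP : P A \is a fin_num by apply: fin_num_measure.
have fQ : Q A \is a fin_num by apply: fin_num_measure.
rewrite -(fineK fP) -(fineK fQ) -!EFinM -!EFinB -!EFinD !lee_fin; lra.
Qed.


Lemma sq_le (R : realType) (X Y r : R) : 0 <= X -> 0 <= Y -> 0 <= r ->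
  X ^+ 2 <= Y ^+ 2 * r ^+ 2 -> X <= Y * r.
Proof. move=> X0 Y0 r0 h; rewrite leNgt; apply/negP => h2.
have h3 : 0 < (X - Y * r) * (X + Y * r).
  apply: mulr_gt0; first by rewrite subr_gt0.
  have : 0 <= Y * r by apply: mulr_ge0.
  lra.
nra. Qed.

Lemma pt_lb (R : realType) (a b s : R) : 0 <= a -> 0 <= b -> 1 <= s ->
  s * (Num.min a (s ^+ 2 * b) + Num.min b (s ^+ 2 * a))
    <= (s ^+ 2 + 1) * Num.sqrt (a * b).
Proof.
move=> a0 b0 s1; have s0 : 0 < s by lra.
have k2 : 1 <= s ^+ 2 by nra.
have r0 := sqrtr_ge0 (a * b).
have r2 := sqr_sqrtr (mulr_ge0 a0 b0).
set r := Num.sqrt (a * b) in r0 r2 *.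
have k1 : 0 <= s ^+ 2 by rewrite sqr_ge0.
case: (leP a (s ^+ 2 * b)) => hab; case: (leP b (s ^+ 2 * a)) => hba.
- apply: sq_le; [nra|lra|by []|].
  rewrite r2; nra.
- apply: le_trans (_ : (s^+2 + 1) * (s * a) <= _).
    nra.
  apply: ler_wpM2l; first lra.
  rewrite -[X in _ <= X]mul1r; apply: sq_le; [nra|lra|by []|].
  rewrite r2; nra.
- apply: le_trans (_ : (s^+2 + 1) * (s * b) <= _).
    nra.
  apply: ler_wpM2l; first lra.
  rewrite -[X in _ <= X]mul1r; apply: sq_le; [nra|lra|by []|].
  rewrite r2; nra.
- have : s ^+ 2 * b >= b by nra.
  have : s ^+ 2 * a >= a by nra.
  lra.
Qed.

Theorem lemma5p3 (R : realType) (d : measure_display) (T : measurableType d)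
  (mu : {measure set T -> \bar R}) (P Q : probability T R) (p q : T -> R)
  (eps delta : R) :
  0 < eps -> 0 <= delta -> delta < 1 ->
  is_density mu P p -> is_density mu Q q ->
  indist P Q eps delta ->
  (Bdist mu p q <=
     (ln ((expR (eps / 2) + expR (- (eps / 2))) / 2) + ln (1 / (1 - delta)))%:E)%E
  /\
  ln ((expR (eps / 2) + expR (- (eps / 2))) / 2) + ln (1 / (1 - delta))
    <= Num.min (eps ^+ 2 / 8) (eps / 2) + delta / (1 - delta).
Proof.
move=> e0 d0 d1 [mp [p0 hP]] [mq [q0 hQ]] hind.
split; last exact: real_part.
have ks : expR eps = expR (eps / 2) ^+ 2.
  by rewrite expr2 -expRD; congr expR; field.
set s := expR (eps / 2) in ks *.
have s1 : 1 <= s by rewrite /s -expR0 ler_expR divr_ge0 // ltW.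
have s0 : 0 < s by lra.
have I1 := @min_int_bound R d T mu P Q p q (expR eps) delta (expR_ge0 _)
  mp p0 hP mq q0 hQ (fun Y mY => (hind Y mY).1).
have I2 := @min_int_bound R d T mu Q P q p (expR eps) delta (expR_ge0 _)
  mq q0 hQ mp p0 hP (fun Y mY => (hind Y mY).2).
rewrite ks in I1 I2.
pose c0 := (1 - delta) / ((s + s^-1) / 2).
have c0pos : 0 < c0.
  rewrite /c0 divr_gt0 //; first lra.
  by rewrite divr_gt0 // addr_gt0 // invr_gt0.
have hBC : (c0%:E <= BC mu p q)%E.
  pose m1 := fun x => Num.min (p x) (s ^+ 2 * q x).
  pose m2 := fun x => Num.min (q x) (s ^+ 2 * p x).
  have mm1 : measurable_fun setT m1.
    apply: measurable_minr => //; apply: measurable_funM => //; exact: measurable_cst.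
  have mm2 : measurable_fun setT m2.
    apply: measurable_minr => //; apply: measurable_funM => //; exact: measurable_cst.
  have m10 : forall x, 0 <= m1 x by move=> x; rewrite le_min p0 mulr_ge0 ?sqr_ge0.
  have m20 : forall x, 0 <= m2 x by move=> x; rewrite le_min q0 mulr_ge0 ?sqr_ge0.
  have k0 : 0 <= s / (s ^+ 2 + 1) by rewrite divr_ge0 //; nra.
  have key : (\int[mu]_x ((s / (s ^+ 2 + 1)) * (m1 x + m2 x))%:E <= BC mu p q)%E.
    rewrite /BC; apply: ge0_le_integral => //.
    - by move=> x _; rewrite lee_fin mulr_ge0 // addr_ge0.
    - apply/measurable_EFinP; apply: measurable_funM; first exact: measurable_cst.
      exact: measurable_funD.
    - apply/measurable_EFinP.
      apply: measurableT_comp (continuous_measurable_fun (@sqrt_continuous R)) _.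
      exact: measurable_funM.
    - move=> x _; rewrite lee_fin.
      have := @pt_lb R (p x) (q x) s (p0 x) (q0 x) s1.
      rewrite -/(m1 x) -/(m2 x) => h.
      rewrite mulrAC ler_pdivrMr; last nra.
      by rewrite [X in _ <= X]mulrC.
  apply: le_trans key.
  under eq_integral => x _ do rewrite EFinM EFinD.
  rewrite ge0_integralZl_EFin //; last 2 first.
  - by move=> x _; rewrite lee_fin addr_ge0.
  - by apply/measurable_EFinP; exact: measurable_funD.
  rewrite ge0_integralD //; last 4 first.
  - by move=> x _; rewrite lee_fin.
  - by apply/measurable_EFinP.
  - by move=> x _; rewrite lee_fin.
  - by apply/measurable_EFinP.
  apply: le_trans (_ : ((s / (s ^+ 2 + 1))%:E * ((1 - delta)%:E + (1 - delta)%:E) <= _)%E).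
    rewrite -EFinD -EFinM lee_fin le_eqVlt; apply/orP; left; apply/eqP.
    rewrite /c0; field.
    by apply/andP; split; apply/eqP; nra.
  rewrite lee_wpmul2l ?lee_fin //.
  exact: leeD.
rewrite /Bdist; case E: (BC mu p q) => [r| |]; rewrite E in hBC.
- rewrite lee_fin in hBC.
  have r0 : 0 < r by apply: lt_le_trans hBC.
  rewrite r0 lee_fin expRN -/s.
  have hl : ln c0 <= ln r by rewrite ler_ln ?posrE.
  have hc : ln c0 = ln (1 - delta) - ln ((s + s^-1) / 2).
    have ha : 0 < 1 - delta by lra.
    have hb : 0 < (s + s^-1) / 2 by rewrite divr_gt0 // addr_gt0 // invr_gt0.
    by rewrite /c0 (@ln_div _ (1 - delta) ((s + s^-1) / 2)) ?posrE.
  rewrite div1r lnV ?posrE; last lra.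
  lra.
- exact: leNye.
- by [].
Qed.
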